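(* Let $n\ge 3$ and let $A=[a_{ij}]_{i,j=1}^{n-1}$ be a real $(n-1)\times(n-1)$ matrix with zero diagonal, with LOP objective function $f_A$ on $\Sigma_{n-1}$. Define the $n\times n$ matrix $A'=[a_{ij}]_{i,j=1}^{n}$ whose upper-left $(n-1)\times(n-1)$ block is $A$, with $a_{in}=-\sum_{j=1}^{n-1}(a_{ij}-a_{ji})$ for all $i=1,\dots,n-1$ and $a_{ni}=0$ for all $i=1,\dots,n$, and let $f_{A'}$ be its LOP objective function on $\Sigma_n$. Then $\sigma'=[i_1\ i_2\ \cdots\ i_{n-1}\ n]$ is a global maximum of $f_{A'}$ if and only if $\sigma=[i_1\ i_2\ \cdots\ i_{n-1}]$ is a global maximum of $f_A$.
   Context: For a real $m\times m$ matrix $M=[m_{ij}]$ the LOP objective function is $f_M(\sigma)=\sum_{k=1}^{m-1}\sum_{l=k+1}^m m_{\sigma(k)\sigma(l)}$ for $\sigma\in\Sigma_m$, the symmetric group on $\{1,\dots,m\}$; $[i_1\cdots i_m]$ denotes the permutation with $\sigma(k)=i_k$ (the index placed in position $k$). A global maximum (optimum) is a maximizer of the objective over $\Sigma_m$. *)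

(* Defs.v *)
From mathcomp Require Import all_boot all_order all_algebra all_fingroup.
Set Implicit Arguments. Unset Strict Implicit. Unset Printing Implicit Defensive.
Import Order.TTheory GRing.Theory Num.Theory.
Local Open Scope ring_scope.

(* LOP objective: f_M(sigma) = sum_{k<l} M (sigma k) (sigma l);
   sigma k is the index placed in position k. *)
Definition lop_obj (R : numDomainType) (m : nat) (M : 'M[R]_m) (s : 'S_m) : R :=
  \sum_(k < m) \sum_(l < m | (k < l)%N) M (s k) (s l).

Definition lop_global_max (R : numDomainType) (m : nat) (M : 'M[R]_m) (s : 'S_m) : Prop :=
  forall t : 'S_m, lop_obj M t <= lop_obj M s.

Definition lop_ext (R : numDomainType) (m : nat) (A : 'M[R]_m) : 'M[R]_(m.+1) :=
  \matrix_(i, j)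
    match unlift ord_max i, unlift ord_max j with
    | Some i', Some j' => A i' j'
    | Some i', None => - \sum_(k < m) (A i' k - A k i')
    | None, _ => 0
    end.

(* Main.v *)
Require Import Defs.
From mathcomp Require Import all_boot all_order all_algebra all_fingroup.
From mathcomp Require Import zify ring.
Set Implicit Arguments. Unset Strict Implicit. Unset Printing Implicit Defensive.
Import Order.TTheory GRing.Theory Num.Theory.
Local Open Scope ring_scope.

Definition Gk (R : numDomainType) (m : nat) (M : 'M[R]_m) (k : 'I_m -> nat) : R :=
  \sum_i \sum_j (if (k i < k j)%N then M i j else 0).

Lemma lop_objG (R : numDomainType) m (M : 'M[R]_m) (s : 'S_m) :
  lop_obj M s = Gk M (fun i => nat_of_ord ((s^-1)%g i)).
Proof.
rewrite /lop_obj /Gk; symmetry.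
rewrite (reindex_inj (@perm_inj _ s)); apply: eq_bigr => k _ /=.
rewrite (reindex_inj (@perm_inj _ s)) [RHS]big_mkcond; apply: eq_bigr => l _ /=.
by rewrite !permK.
Qed.

Lemma Gk_eq (R : numDomainType) m (M : 'M[R]_m) k1 k2 :
  (forall i j, (k1 i < k1 j)%N = (k2 i < k2 j)%N) -> Gk M k1 = Gk M k2.
Proof. by move=> H; apply: eq_bigr => i _; apply: eq_bigr => j _; rewrite H. Qed.

Lemma rank_perm m (key : 'I_m -> nat) : injective key ->
  exists t : 'S_m, forall i j, (nat_of_ord ((t^-1)%g i) < (t^-1)%g j)%N = (key i < key j)%N.
Proof.
move=> kinj.
pose rk i := #|[set j | (key j < key i)%N]|.
have rklt i : (rk i < m)%N.
  rewrite -[X in (_ < X)%N]card_ord -cardsT; apply: proper_card.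
  rewrite properT; apply/negP => /eqP E.
  by have := in_setT i; rewrite -E inE ltnn.
have mono i j : (key i < key j)%N -> (rk i < rk j)%N.
  move=> h; apply: proper_card; apply/properP; split.
    by apply/subsetP => x; rewrite !inE => hx; apply: ltn_trans hx h.
  by exists i; rewrite !inE ?h // ltnn.
have eqr i j : (rk i < rk j)%N = (key i < key j)%N.
  case: (ltngtP (key i) (key j)) => h.
  - by rewrite mono.
  - by apply/negbTE; rewrite -leqNgt ltnW // mono.
  - by rewrite (kinj _ _ h) ltnn.
pose f i := Ordinal (rklt i).
have finj : injective f.
  move=> i j /(congr1 val) /= E; apply: kinj.
  case: (ltngtP (key i) (key j)) => // h.
  - by have := mono _ _ h; rewrite E ltnn.
  - by have := mono _ _ h; rewrite E ltnn.
exists (perm finj)^-1%g => i j; by rewrite invgK !permE /= eqr.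
Qed.

Lemma pw (R : numDomainType) (x : R) (qi qj p m : nat) : qi != p -> qj != p ->
  (qi <= m)%N -> (qj <= m)%N ->
  (if ((if (qi < p)%N then qi + m.+1 else qi) < (if (qj < p)%N then qj + m.+1 else qj))%N
   then x else 0) = (if (qi < qj)%N then x else 0) + ((qj < p)%N%:R - (qi < p)%N%:R) * x.
Proof.
move=> /eqP hi /eqP hj hm1 hm2.
case: (ltnP qi p) => h1; case: (ltnP qj p) => h2 /=;
  case: (ltnP qi qj) => h3 /=; try (case: ifP => h4 /=); try (exfalso; lia); ring.
Qed.

Lemma widen_lift m (i : 'I_m) : widen_ord (leqnSn m) i = lift ord_max i.
Proof. by apply: val_inj; rewrite /= /bump leqNgt ltn_ord. Qed.

Lemma ext_G (R : numDomainType) m (A : 'M[R]_m) (pi : 'S_(m.+1)) :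
  Gk (lop_ext A) (fun i => nat_of_ord (pi i)) =
  Gk A (fun i => let q := nat_of_ord (pi (lift ord_max i)) in
                 if (q < pi ord_max)%N then (q + m.+1)%N else q).
Proof.
rewrite /Gk big_ord_recr /= [X in _ + X]big1; last first.
  by move=> j _; rewrite mxE unlift_none; case: ifP.
rewrite addr0.
have qne i : nat_of_ord (pi (lift ord_max i)) != pi ord_max.
  by apply/eqP => /val_inj /perm_inj /eqP; rewrite eq_sym (negbTE (neq_lift _ _)).
have qle i : (nat_of_ord (pi (lift ord_max i)) <= m)%N.
  by rewrite -ltnS ltn_ord.
under eq_bigr => i _ do
  rewrite big_ord_recr /= widen_lift mxE liftK unlift_none;
under eq_bigr => i _ do (under eq_bigr => j _ do rewrite widen_lift mxE !liftK);
under [RHS]eq_bigr => i _ do (under eq_bigr => j _ do rewrite pw ?qne ?qle //).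
rewrite big_split /=.
under [X in _ = X]eq_bigr => i _ do rewrite big_split /=.
rewrite big_split /=; congr (_ + _).
pose b i : R := ((pi (lift ord_max i) < pi ord_max)%N)%:R.
transitivity (\sum_i \sum_j (b i * A j i - b i * A i j)).
  apply: eq_bigr => i _; rewrite /b.
  case: ifP => _ /=; last by rewrite big1 // => j _; rewrite !mul0r subrr.
  by rewrite -sumrN; apply: eq_bigr => j _; rewrite !mul1r opprB.
transitivity (\sum_i \sum_j (b j * A i j - b i * A i j)); last first.
  by apply: eq_bigr => i _; apply: eq_bigr => j _; rewrite mulrBl.
rewrite (eq_bigr (fun i => \sum_j b i * A j i - \sum_j b i * A i j)); last first.
  by move=> i _; rewrite sumrB.
rewrite [RHS](eq_bigr (fun i => \sum_j b j * A i j - \sum_j b i * A i j)); last first.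
  by move=> i _; rewrite sumrB.
rewrite !sumrB; congr (_ - _).
exact: exchange_big.
Qed.

Lemma ext_lift (R : numDomainType) m (A : 'M[R]_m) (s : 'S_m) :
  lop_obj (lop_ext A) (lift_perm ord_max ord_max s) = lop_obj A s.
Proof.
rewrite !lop_objG ext_G; apply: Gk_eq => i j.
rewrite lift_permV !lift_perm_lift lift_perm_id /=.
have bm (k : 'I_m) : bump m k = k by rewrite /bump leqNgt ltn_ord.
by rewrite !bm !ltn_ord ltn_add2r.
Qed.


Theorem proposition4 (R : realFieldType) (m : nat) (hm : (2 <= m)%N)
  (A : 'M[R]_m) (hA : forall i, A i i = 0) (s : 'S_m) :
  lop_global_max (lop_ext A) (lift_perm ord_max ord_max s) <-> lop_global_max A s.
Proof.
split => H t.
  by rewrite -(ext_lift A t) -(ext_lift A s); apply: H.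
rewrite ext_lift lop_objG ext_G.
set key := (fun i : 'I_m => _).
have kinj : injective key.
  move=> i j; rewrite /key.
  have qle k : (nat_of_ord ((t^-1)%g (lift ord_max k)) <= m)%N by rewrite -ltnS ltn_ord.
  have hi := qle i; have hj := qle j.
  move: hi hj.
  set a := nat_of_ord _; set c := nat_of_ord _; set p := nat_of_ord _.
  move=> hi hj E.
  have ac : a = c.
    by move: E; case: ifP => h1; case: ifP => h2 E; lia.
  apply: (@lift_inj _ ord_max); apply: (@perm_inj _ (t^-1)%g); exact: val_inj.
have [u Hu] := rank_perm kinj.
rewrite -(Gk_eq _ Hu) -lop_objG; exact: H.
Qed.
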